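(* Let $G$ and $H$ be connected graphs. If $H$ is an immersion of $G$, then $L(H)$ is a minor of $L(G)$.
   Context: All graphs are finite and loopless but may have parallel edges. For a graph $H$, the line graph $L(H)$ is the simple graph with vertex set $E(H)$ in which two distinct edges of $H$ are adjacent if and only if they share an end. Lifting a pair of adjacent edges $uv,vw$ means deleting them and adding a new edge $uw$ (if $u=w$ the loop is deleted). $H$ is an immersion of $G$ if a graph isomorphic to $H$ can be obtained from a subgraph of $G$ by repeatedly lifting pairs of edges. A graph $J$ is a minor of $G$ if a graph isomorphic to $J$ can be obtained from a subgraph of $G$ by contracting edges. *)

(* Defs.v *)
From Stdlib Require Import Relations.
From mathcomp Require Import all_boot.
Set Implicit Arguments. Unset Strict Implicit. Unset Printing Implicit Defensive.

(* A finite multigraph: finite vertex type, finite edge type (so parallel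
   edges are allowed), and each edge has two ends (orientation irrelevant). *)
Record mgraph := MGraph {
  vert : finType;
  edge : finType;
  src : edge -> vert;
  tgt : edge -> vert }.

Definition loopless (G : mgraph) : Prop := forall e : edge G, src e != tgt e.

Definition adj (G : mgraph) : rel (vert G) :=
  fun u v => [exists e : edge G,
    ((src e == u) && (tgt e == v)) || ((src e == v) && (tgt e == u))].

Definition mconnected (G : mgraph) : Prop :=
  (exists v : vert G, True) /\ forall u v : vert G, connect (@adj G) u v.

(* Edge lists over a fixed vertex type; an edge (x,y) is unordered, which is
   accounted for by the reorder/flip steps below. *)
Definition lift_step (V : eqType) (l l' : seq (V * V)) : Prop :=
  (* reordering the edge list (edges are a multiset) *)
  perm_eq l l'
  (* the orientation of an edge is irrelevant *)
  \/ (exists x y rest, l = (x, y) :: rest /\ l' = (y, x) :: rest)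
  (* lifting two distinct edges uv, vw: delete them and add uw
     (if u = w the resulting loop is deleted) *)
  \/ (exists u v w rest, l = (u, v) :: (v, w) :: rest /\
        l' = if u == w then rest else (u, w) :: rest).

Definition lifts (V : eqType) := clos_refl_trans (seq (V * V)) (@lift_step V).

Definition edge_pairs (G : mgraph) (s : seq (edge G)) : seq (vert G * vert G) :=
  [seq (src e, tgt e) | e <- s].

(* H is an immersion of G: a subgraph of G (vertex set S, edge set F with
   ends in S) can be turned, by repeated lifting, into a graph isomorphic to
   H; the isomorphism is an injective f : V(H) -> V(G) with image S and an
   edge bijection (expressed as equality of edge multisets up to order and
   orientation, which the lift_step closure allows). *)
Definition immersion (H G : mgraph) : Prop :=
  exists (f : vert H -> vert G) (F : {set edge G}),
    injective f /\
    (forall e, e \in F -> (src e \in f @: [set: vert H]) && (tgt e \in f @: [set: vert H])) /\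
    lifts (edge_pairs (enum F))
          [seq (f (src e), f (tgt e)) | e <- enum (edge H)].

Definition line_rel (H : mgraph) : rel (edge H) :=
  fun e f => (e != f) &&
    [|| src e == src f, src e == tgt f, tgt e == src f | tgt e == tgt f].

Definition induced_connected (T : finType) (r : rel T) (B : {set T}) : Prop :=
  forall a b, a \in B -> b \in B ->
    connect (fun x y => [&& r x y, x \in B & y \in B]) a b.

Definition minor (T1 T2 : finType) (r1 : rel T1) (r2 : rel T2) : Prop :=
  exists B : T1 -> {set T2},
    (forall x, B x != set0) /\
    (forall x y, x != y -> [disjoint B x & B y]) /\
    (forall x, induced_connected r2 (B x)) /\
    (forall x y, r1 x y -> exists a b, [/\ a \in B x, b \in B y & r2 a b]).

(* Main.v *)
Require Import Defs.
From mathcomp Require Import all_boot.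
Set Implicit Arguments. Unset Strict Implicit. Unset Printing Implicit Defensive.

Lemma pairwise_perm (T : eqType) (r : rel T) : symmetric r ->
  forall s t, perm_eq s t -> pairwise r s -> pairwise r t.
Proof.
move=> rs; elim=> [|x s IH] t.
  by rewrite perm_sym => /perm_nilP ->.
move=> pst /andP[ax ps].
have xt : x \in t by rewrite -(perm_mem pst) mem_head.
case/splitPr: xt pst => t1 t2 pst.
have ps' : perm_eq s (t1 ++ t2).
  rewrite -(perm_cons x); apply: perm_trans pst _.
  by apply/permP=> a; rewrite /= !count_cat /= addnCA.
have pw := IH _ ps' ps.
have axt : all (r x) (t1 ++ t2) by rewrite -(perm_all _ ps').
move: pw axt; rewrite !pairwise_cat allrel_consr pairwise_cons all_cat.
case/and3P=> -> -> -> /andP[a1 ->]; rewrite !andbT /=.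
by apply/allP=> y yt; rewrite rs; apply: (allP a1).
Qed.

Lemma union_conn (T : finType) (r : rel T) (B1 B2 : {set T}) a b :
  symmetric r -> induced_connected r B1 -> induced_connected r B2 ->
  a \in B1 -> b \in B2 -> r a b -> induced_connected r (B1 :|: B2).
Proof.
move=> rs c1 c2 aB bB rab.
have sub1 : forall B : {set T}, B \subset B1 :|: B2 -> forall x y,
    connect (fun x y => [&& r x y, x \in B & y \in B]) x y ->
    connect (fun x y => [&& r x y, x \in B1 :|: B2 & y \in B1 :|: B2]) x y.
  move=> B sB x y; apply: connect_sub => u v /and3P[ruv uB vB].
  by apply: connect1; rewrite ruv !(subsetP sB).
have aU : a \in B1 :|: B2 by rewrite inE aB.
have bU : b \in B1 :|: B2 by rewrite inE bB orbT.
have eab : connect (fun x y => [&& r x y, x \in B1 :|: B2 & y \in B1 :|: B2]) a b.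
  by apply: connect1; rewrite rab aU bU.
have eba : connect (fun x y => [&& r x y, x \in B1 :|: B2 & y \in B1 :|: B2]) b a.
  by apply: connect1; rewrite rs rab aU bU.
move=> x y; rewrite !inE => /orP[xB|xB] /orP[yB|yB].
- exact: (sub1 B1 (subsetUl _ _) _ _ (c1 _ _ xB yB)).
- apply: connect_trans (sub1 B1 (subsetUl _ _) _ _ (c1 _ _ xB aB)) _.
  apply: connect_trans eab _.
  exact: (sub1 B2 (subsetUr _ _) _ _ (c2 _ _ bB yB)).
- apply: connect_trans (sub1 B2 (subsetUr _ _) _ _ (c2 _ _ xB bB)) _.
  apply: connect_trans eba _.
  exact: (sub1 B1 (subsetUl _ _) _ _ (c1 _ _ aB yB)).
- exact: (sub1 B2 (subsetUr _ _) _ _ (c2 _ _ xB yB)).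
Qed.

Section Main.
Variable G : mgraph.

Lemma line_rel_sym : symmetric (@line_rel G).
Proof.
move=> a b; rewrite /line_rel (eq_sym b a); congr (_ && _).
by rewrite (eq_sym (src b)) (eq_sym (src b) (tgt a)) (eq_sym (tgt b) (src a))
  (eq_sym (tgt b)); case: (src a == src b); case: (src a == tgt b);
  case: (tgt a == src b); case: (tgt a == tgt b).
Qed.

Lemma share (a b : edge G) z : a != b -> (src a == z) || (tgt a == z) ->
  (src b == z) || (tgt b == z) -> line_rel a b.
Proof.
move=> ne /orP[]/eqP ea /orP[]/eqP eb; by rewrite /line_rel ne ea eb eqxx ?orbT.
Qed.

Definition incid (x : vert G) (B : {set edge G}) : Prop :=
  exists2 a, a \in B & (src a == x) || (tgt a == x).

Definition good (p : (vert G * vert G) * {set edge G}) : Prop :=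
  induced_connected (@line_rel G) p.2 /\ incid p.1.1 p.2 /\ incid p.1.2 p.2.

Definition drel : rel ((vert G * vert G) * {set edge G}) :=
  fun p q => [disjoint p.2 & q.2].

Definition Inv (L : seq ((vert G * vert G) * {set edge G})) : Prop :=
  pairwise drel L /\ forall p, p \in L -> good p.

Lemma drel_sym : symmetric drel.
Proof. by move=> p q; rewrite /drel disjoint_sym. Qed.

Lemma step_inv l l' : lift_step l l' -> forall L, map fst L = l -> Inv L ->
  exists2 L', map fst L' = l' & Inv L'.
Proof.
case=> [pl|[[x [y [rest [-> ->]]]]|[u [v [w [rest [-> ->]]]]]]] L.
- case: L => [|p0 L0] eL [pw gd].
    move: pl; rewrite -eL /= perm_sym => /perm_nilP ->.
    by exists [::] => //; split.
  set L := p0 :: L0 in eL pw gd *.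
  move: pl; rewrite -eL perm_sym => /(perm_iotaP p0.1) [Is pIs el'].
  rewrite size_map in pIs.
  have Ilt : forall i, i \in Is -> i < size L.
    by move=> i; rewrite (perm_mem pIs) mem_iota.
  exists (map (nth p0 L) Is).
    rewrite el' -map_comp; apply/eq_in_map.
    by move=> i /Ilt iL; rewrite [RHS](nth_map p0).
  have pL : perm_eq L (map (nth p0 L) Is).
    by rewrite -{1}(mkseq_nth p0 L) /mkseq; apply: perm_map; rewrite perm_sym.
  split; first exact: pairwise_perm drel_sym _ _ pL pw.
  by move=> p; rewrite -(perm_mem pL); apply: gd.
- case: L => [|[[a b] B] R] //= [[-> ->] eR] [pw gd].
  exists (((y, x), B) :: R); first by rewrite /= eR.
  split; first exact: pw.
  move=> p; rewrite inE => /orP[/eqP->|pR]; last by apply: gd; rewrite inE pR orbT.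
  have [c [ix iy]] := gd _ (mem_head _ _).
  by split.
- case: L => [|[[a b] B1] [|[[c d] B2] R]] //= [[-> ->] [-> ->] eR] [pw gd].
  move: pw; rewrite !pairwise_cons => /and3P[/andP[d12 d1R] d2R pR].
  have gR : forall p, p \in R -> good p.
    by move=> p pR'; apply: gd; rewrite !inE pR' !orbT.
  case: (u =P w) => [_|uw].
    by exists R.
  exists (((u, w), B1 :|: B2) :: R); first by rewrite /= eR.
  split.
    rewrite pairwise_cons pR andbT; apply/allP=> q qR.
    rewrite /drel /= -setI_eq0 setIUl setU_eq0 !setI_eq0.
    by have := allP d1R _ qR; have := allP d2R _ qR; rewrite /drel /= => -> ->.
  move=> p; rewrite inE => /orP[/eqP->|pR']; last exact: gR.
  have [c1 [[e1 e1B e1u] [e2 e2B e2v]]] := gd _ (mem_head _ _).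
  have m2 : (v, w, B2) \in [:: (u, v, B1), (v, w, B2) & R] by rewrite !inE eqxx orbT.
  have [c2 [[e3 e3B e3v] [e4 e4B e4w]]] := gd _ m2.
  rewrite /good /=; split; last split.
  - apply: (union_conn line_rel_sym c1 c2 e2B e3B).
    apply: (share (z := v)) => //.
    apply/eqP=> e23; move: d12; rewrite /drel /= => /disjointFr/(_ e2B).
    by rewrite e23 e3B.
  - by exists e1 => //; rewrite inE e1B.
  - by exists e4 => //; rewrite inE e4B orbT.
Qed.

Lemma lifts_inv l l' : lifts l l' -> forall L, map fst L = l -> Inv L ->
  exists2 L', map fst L' = l' & Inv L'.
Proof.
elim=> {l l'} [l l' st|l|l1 l2 l3 _ IH1 _ IH2] L eL iL.
- exact: step_inv st L eL iL.
- by exists L.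
- have [L2 e2 i2] := IH1 L eL iL; exact: IH2 L2 e2 i2.
Qed.

End Main.

Theorem proposition9p1 (G H : mgraph) :
  loopless G -> loopless H -> mconnected G -> mconnected H ->
  immersion H G ->
  minor (@line_rel H) (@line_rel G).
Proof.
move=> _ _ [[v0 _] _] _ [f [F [_ [_ lf]]]].
set L0 := [seq ((src e, tgt e), [set e]) | e <- enum F].
have eL0 : map fst L0 = edge_pairs (enum F) by rewrite /L0 -map_comp.
have iL0 : Inv L0.
  split.
    rewrite /L0 pairwise_map; have := enum_uniq (mem F).
    rewrite uniq_pairwise; apply: sub_pairwise => a b /= ab.
    by rewrite /drel /= disjoints1 inE.
  move=> p /mapP[e _ ->]; split; last split.
  - by move=> a b; rewrite !inE => /eqP-> /eqP->; exact: connect0.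
  - by exists e; rewrite ?inE ?eqxx.
  - by exists e; rewrite ?inE ?eqxx ?orbT.
have [L eL [pw gd]] := lifts_inv lf eL0 iL0.
pose p0 : (vert G * vert G) * {set edge G} := ((v0, v0), set0).
pose i e := index e (enum (edge H)).
have iLt : forall e, i e < size L.
  by move=> e; rewrite -(size_map fst) eL size_map index_mem mem_enum.
have key : forall e, (nth p0 L (i e)).1 = (f (src e), f (tgt e)).
  move=> e; rewrite -(nth_map p0 (v0, v0) fst) // eL (nth_map e).
    by rewrite nth_index ?mem_enum.
  by rewrite index_mem mem_enum.
have gde : forall e, good (nth p0 L (i e)) by move=> e; apply: gd; apply: mem_nth.
exists (fun e => (nth p0 L (i e)).2); split; last split; last split.
- move=> e; have [_ [[a aB _] _]] := gde e; by apply/set0Pn; exists a.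
- move=> x y xy.
  have pd := pairwiseP p0 pw.
  case: (ltngtP (i x) (i y)) => hxy.
  + by apply: (pd (i x) (i y)) => //; rewrite inE iLt.
  + rewrite disjoint_sym; by apply: (pd (i y) (i x)) => //; rewrite inE iLt.
  + have mx : x \in enum (edge H) by rewrite mem_enum.
    have my : y \in enum (edge H) by rewrite mem_enum.
    have exy : x = y by rewrite -[x](nth_index x mx) -[y](nth_index x my) -/(i x) -/(i y) hxy.
    by rewrite exy eqxx in xy.
- by move=> e; case: (gde e).
- move=> x y /andP[ne cond].
  have dxy : [disjoint (nth p0 L (i x)).2 & (nth p0 L (i y)).2].
    have pd := pairwiseP p0 pw.
    case: (ltngtP (i x) (i y)) => hxy.
    + by apply: (pd (i x) (i y)) => //; rewrite inE iLt.
    + rewrite disjoint_sym; by apply: (pd (i y) (i x)) => //; rewrite inE iLt.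
    + have mx : x \in enum (edge H) by rewrite mem_enum.
      have my : y \in enum (edge H) by rewrite mem_enum.
      have exy : x = y by rewrite -[x](nth_index x mx) -[y](nth_index x my) -/(i x) -/(i y) hxy.
      by rewrite exy eqxx in ne.
  have hz : forall z, incid z (nth p0 L (i x)).2 -> incid z (nth p0 L (i y)).2 ->
      exists a b, [/\ a \in (nth p0 L (i x)).2, b \in (nth p0 L (i y)).2
                    & line_rel a b].
    move=> z [a aB az] [b bB bz]; exists a, b; split => //.
    apply: (share (z := z)) => //; apply/eqP=> ab.
    by move: (disjointFr dxy aB); rewrite ab bB.
  have [_ [sx tx]] := gde x; have [_ [sy ty]] := gde y.
  rewrite !key /= in sx tx sy ty.
  case/or4P: cond => /eqP ee; apply: (hz _ _ _).
  + exact: sx. + by rewrite ee.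
  + exact: sx. + by rewrite ee.
  + exact: tx. + by rewrite ee.
  + exact: tx. + by rewrite ee.
Qed.
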